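(* Let $F$ be a field of characteristic not $2$, let $a\in F^*$ be a non-square, and let $L=F(\sqrt{a})$. Then $F^{(3)}\subset L^{(3)}$.
   Context: All fields are taken inside a fixed quadratic closure $F_q$ of $F$. For a field $K$ of characteristic not $2$, define $K^{(1)}=K$ and, for $n\ge 1$, $K^{(n+1)}$ is the compositum of all quadratic extensions of $K^{(n)}$ which are Galois over $K$. *)

(* Defs.v *)
From mathcomp Require Import all_boot all_order all_algebra.
Set Implicit Arguments. Unset Strict Implicit. Unset Printing Implicit Defensive.
Import GRing.Theory.
Local Open Scope ring_scope.

Section Defs.
Variable Om : fieldType.

Definition incl (A B : Om -> Prop) := forall x, A x -> B x.

Definition is_subfield (K : Om -> Prop) : Prop :=
  [/\ K 0, K 1, (forall x y, K x -> K y -> K (x - y)),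
      (forall x y, K x -> K y -> K (x * y)) & (forall x, K x -> K x^-1)].

Definition quad_closure (F : Om -> Prop) : Prop :=
  [/\ is_subfield F,
      (forall x : Om, exists y, y * y = x) &
      (forall E : Om -> Prop, is_subfield E -> incl F E ->
         (forall x, E x -> exists y, E y /\ y * y = x) -> forall x, E x)].

Definition adjoin (K : Om -> Prop) (r : Om) : Om -> Prop :=
  fun x => forall E, is_subfield E -> incl K E -> E r -> E x.

(* M is a quadratic extension of K: K <= M and [M:K] = 2, i.e. M has a
   K-basis {1, u}. *)
Definition quad_ext (K M : Om -> Prop) : Prop :=
  [/\ is_subfield K, is_subfield M, incl K M &
      exists u, [/\ M u, ~ K u &
        forall m, M m -> exists a b, [/\ K a, K b & m = a + b * u]]].

(* M is Galois over K: K <= M and every element of M is a root of a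
   separable polynomial over K which splits in M. *)
Definition galois_over (K M : Om -> Prop) : Prop :=
  [/\ is_subfield K, is_subfield M, incl K M &
      forall x, M x -> exists r : seq Om,
        [/\ uniq r, x \in r, (forall z, z \in r -> M z) &
            forall i, K ((\prod_(z <- r) ('X - z%:P))`_i)]].

Definition compositum (B : Om -> Prop) (S : (Om -> Prop) -> Prop) : Om -> Prop :=
  fun x => forall E, is_subfield E -> incl B E ->
             (forall M, S M -> incl M E) -> E x.

(* kpow K n = K^{(n+1)} *)
Fixpoint kpow (K : Om -> Prop) (n : nat) : Om -> Prop :=
  match n with
  | 0 => K
  | m.+1 => compositum (kpow K m)
              (fun M => quad_ext (kpow K m) M /\ galois_over K M)
  end.

Definition ksup (K : Om -> Prop) (n : nat) : Om -> Prop := kpow K n.-1.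

End Defs.

(* Main.v *)
Require Import Defs.
From HB Require Import structures.
From mathcomp Require Import all_boot all_order all_algebra.
From Stdlib Require Import ClassicalEpsilon Classical.
From mathcomp Require Import ring.
Set Implicit Arguments. Unset Strict Implicit. Unset Printing Implicit Defensive.
Import GRing.Theory.
Local Open Scope ring_scope.

Section SF.
Variables (Om : fieldType) (S : Om -> Prop).
Hypothesis hS : is_subfield S.
Lemma sf0 : S 0. Proof. by case: hS. Qed.
Lemma sf1 : S 1. Proof. by case: hS. Qed.
Lemma sfB x y : S x -> S y -> S (x - y). Proof. by case: hS => _ _ h _ _; apply: h. Qed.
Lemma sfM x y : S x -> S y -> S (x * y). Proof. by case: hS => _ _ _ h _; apply: h. Qed.
Lemma sfV x : S x -> S x^-1. Proof. by case: hS => _ _ _ _ h; apply: h. Qed.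
Lemma sfN x : S x -> S (- x). Proof. by move=> h; rewrite -sub0r; apply: sfB => //; apply: sf0. Qed.
Lemma sfD x y : S x -> S y -> S (x + y).
Proof. by move=> hx hy; rewrite -[y]opprK; apply: sfB => //; apply: sfN. Qed.
End SF.

Section GalB.
Variables (Om : fieldType) (K M : Om -> Prop).
Hypotheses (hK : is_subfield K) (hM : is_subfield M) (hKM : incl K M).

Definition kb : pred Om := fun x => if excluded_middle_informative (K x) then true else false.
Lemma kbP x : reflect (K x) (kb x).
Proof. rewrite /kb; case: excluded_middle_informative => h; by constructor. Qed.

Fact kb_divring : divring_closed kb.
Proof.
split; first by apply/kbP; apply: sf1.
  by move=> x y /kbP hx /kbP hy; apply/kbP; apply: sfB.
by move=> x y /kbP hx /kbP hy; apply/kbP; apply: sfM => //; apply: sfV.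
Qed.
HB.instance Definition _ := GRing.isDivringClosed.Build _ kb kb_divring.

Record kT := KT { kval :> Om; kvalP : kval \in kb }.
HB.instance Definition _ := [isSub for kval].
HB.instance Definition _ := [Choice of kT by <:].
HB.instance Definition _ := [SubChoice_isSubComUnitRing of kT by <:].
HB.instance Definition _ := [SubComUnitRing_isSubIntegralDomain of kT by <:].
HB.instance Definition _ := [SubIntegralDomain_isSubField of kT by <:].

Lemma Kval (a : kT) : K (val a).
Proof. by apply/kbP; apply: (valP a). Qed.

Definition Good (x : Om) := exists n (A : 'M[kT]_n) (Q : 'M[Om]_n) (d : 'rV[Om]_n),
  [/\ Q \in unitmx, Q *m map_mx val A = diag_mx d *m Q, (forall i, M (d 0 i)) &
      exists i, x = d 0 i].

Definition Gk (x : Om) := exists r : seq Om,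
  [/\ uniq r, x \in r, (forall z, z \in r -> M z) &
      forall i, K ((\prod_(z <- r) ('X - z%:P))`_i)].

Lemma Good_const c : K c -> Good c.
Proof.
move=> Kc; have kc : c \in kb by apply/kbP.
exists 1%N, (KT kc)%:M, 1%:M, (const_mx c); split.
- exact: unitmx1.
- by rewrite map_scalar_mx mul1mx diag_const_mx mulmx1.
- by move=> i; rewrite mxE; apply: hKM.
- by exists ord0; rewrite mxE.
Qed.

Lemma rowv_ext n m (A B : 'M[Om]_(n,m)) : (forall u : 'rV_n, u *m A = u *m B) -> A = B.
Proof.
move=> H; apply/row_matrixP => i.
by rewrite -[A]mul1mx -[B]mul1mx !row_mul H.
Qed.

Lemma mxvec_diag n m (W E : 'M[Om]_(n,m)) :
  mxvec W *m diag_mx (mxvec E) = mxvec (\matrix_(i,j) (W i j * E i j)).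
Proof.
apply/rowP => k; case/mxvec_indexP: k => i j.
by rewrite mul_mx_diag mxE !mxvecE mxE.
Qed.

Lemma mul_rV_lin' a b c d (f : 'M[Om]_(a,b) -> 'M[Om]_(c,d)) (hf : linear f) u :
  u *m lin_mx f = mxvec (f (vec_mx u)).
Proof.
pose fL : {linear 'M[Om]_(a,b) -> 'M[Om]_(c,d)} := HB.pack f (GRing.isLinear.Build _ _ _ _ f hf).
exact: (mul_rV_lin fL u).
Qed.

Lemma mul_vec_lin' a b c d (f : 'M[Om]_(a,b) -> 'M[Om]_(c,d)) (hf : linear f) A :
  mxvec A *m lin_mx f = mxvec (f A).
Proof. by rewrite mul_rV_lin' // mxvecK. Qed.

Lemma lin_g n m (QA : 'M[Om]_n) (QB : 'M[Om]_m) :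
  linear (fun W : 'M[Om]_(n,m) => QA *m W *m QB).
Proof. by move=> k W1 W2 /=; rewrite mulmxDr mulmxDl -scalemxAr -scalemxAl. Qed.

Lemma lin_unit n m (QA : 'M[Om]_n) (QB : 'M[Om]_m) : QA \in unitmx -> QB \in unitmx ->
  lin_mx (fun W : 'M[Om]_(n,m) => invmx QA *m W *m QB) \in unitmx.
Proof.
move=> QAu QBu.
have : lin_mx (fun W : 'M[Om]_(n,m) => invmx QA *m W *m QB) *m
       lin_mx (fun W : 'M[Om]_(n,m) => QA *m W *m invmx QB) = 1%:M.
  have l1 : linear (fun W : 'M[Om]_(n,m) => invmx QA *m W *m QB).
    by move=> k W1 W2 /=; rewrite mulmxDr mulmxDl -scalemxAr -scalemxAl.
  have l2 : linear (fun W : 'M[Om]_(n,m) => QA *m W *m invmx QB).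
    by move=> k W1 W2 /=; rewrite mulmxDr mulmxDl -scalemxAr -scalemxAl.
  apply: rowv_ext => u; rewrite mulmxA !mul_rV_lin' // mulmx1 mxvecK.
  by rewrite !mulmxA mulmxV // mul1mx -mulmxA mulmxV // mulmx1 vec_mxK.
by case/mulmx1_unit.
Qed.

Lemma Good_bin (op : Om -> Om -> Om) (opm : forall n m, 'M[kT]_n -> 'M[kT]_m ->
      'M[kT]_(n,m) -> 'M[kT]_(n,m))
  (opo : forall n m, 'M[Om]_n -> 'M[Om]_m -> 'M[Om]_(n,m) -> 'M[Om]_(n,m)) :
  (forall x y, M x -> M y -> M (op x y)) ->
  (forall n m A B, linear (opo n m A B)) ->
  (forall n m A B Z, map_mx val (opm n m A B Z) = opo n m (map_mx val A) (map_mx val B) (map_mx val Z)) ->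
  (forall n m (QA : 'M[Om]_n) (QB : 'M[Om]_m) dA dB W, QA \in unitmx -> QB \in unitmx ->
     opo n m (invmx QA *m diag_mx dA *m QA) (invmx QB *m diag_mx dB *m QB)
       (invmx QA *m W *m QB) =
     invmx QA *m (\matrix_(i,j) (W i j * op (dA 0 i) (dB 0 j))) *m QB) ->
  forall x y, Good x -> Good y -> Good (op x y).
Proof.
move=> Mop opoL mapop opoP x y [n [A [QA [dA [QAu QAA dAM [i ->]]]]]]
  [m [B [QB [dB [QBu QBB dBM [j ->]]]]]].
pose E := \matrix_(i, j) op (dA 0 i) (dB 0 j) : 'M[Om]_(n,m).
exists (n * m)%N, (lin_mx (opm n m A B)),
  (lin_mx (fun W : 'M[Om]_(n,m) => invmx QA *m W *m QB)), (mxvec E).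
have eA : map_mx val A = invmx QA *m diag_mx dA *m QA.
  by rewrite -mulmxA -QAA mulmxA mulVmx // mul1mx.
have eB : map_mx val B = invmx QB *m diag_mx dB *m QB.
  by rewrite -mulmxA -QBB mulmxA mulVmx // mul1mx.
split.
- exact: lin_unit.
- rewrite (map_lin_mx (gf := opo n m (map_mx val A) (map_mx val B))); last first.
    by move=> Z; rewrite mapop.
  apply: rowv_ext => u; rewrite -[u]vec_mxK; set W := vec_mx u.
  rewrite !mulmxA mul_vec_lin'; last exact: lin_g.
  rewrite mul_vec_lin'; last exact: opoL.
  rewrite mxvec_diag mul_vec_lin'; last exact: lin_g.
  congr mxvec.
  rewrite eA eB opoP //; congr (_ *m _ *m _); apply/matrixP => a b; rewrite !mxE.
  by rewrite /W.
- by move=> k; case/mxvec_indexP: k => a b; rewrite mxvecE mxE; apply: Mop.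
- by exists (mxvec_index i j); rewrite mxvecE mxE.
Qed.


Lemma Good_add x y : Good x -> Good y -> Good (x + y).
Proof.
apply: (@Good_bin +%R (fun n m A B Z => A *m Z + Z *m B) (fun n m A B Z => A *m Z + Z *m B)).
- by move=> a b; apply: sfD.
- move=> n m A B k Z1 Z2 /=; rewrite mulmxDr mulmxDl -scalemxAr -scalemxAl.
  by rewrite scalerDr addrACA.
- by move=> n m A B Z; rewrite map_mxD !map_mxM.
move=> n m QA QB dA dB W QAu QBu.
have -> : \matrix_(i, j) (W i j * (dA 0 i + dB 0 j)) = diag_mx dA *m W + W *m diag_mx dB.
  by apply/matrixP => a b; rewrite mul_diag_mx mul_mx_diag !mxE mulrDr mulrC.
rewrite mulmxDr mulmxDl; congr (_ + _).
  by rewrite -!mulmxA (mulmxA QA) mulmxV // mul1mx.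
by rewrite !mulmxA -(mulmxA _ QB) mulmxV // mulmx1.
Qed.

Lemma Good_mul x y : Good x -> Good y -> Good (x * y).
Proof.
apply: (@Good_bin *%R (fun n m A B Z => A *m Z *m B) (fun n m A B Z => A *m Z *m B)).
- by move=> a b; apply: sfM.
- by move=> n m A B k Z1 Z2 /=; rewrite mulmxDr mulmxDl -scalemxAr -scalemxAl.
- by move=> n m A B Z; rewrite !map_mxM.
move=> n m QA QB dA dB W QAu QBu.
have -> : \matrix_(i, j) (W i j * (dA 0 i * dB 0 j)) = diag_mx dA *m W *m diag_mx dB.
  by apply/matrixP => a b; rewrite mul_mx_diag mul_diag_mx !mxE mulrCA mulrA.
rewrite -!mulmxA (mulmxA QA) mulmxV // mul1mx; congr (_ *m (_ *m _)).
by rewrite !mulmxA -(mulmxA _ QB) mulmxV // mulmx1.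
Qed.


Lemma Good_G x : Good x -> Gk x.
Proof.
move=> [n [A [Q [d [Qu QA dM [i ->]]]]]].
case: n A Q d Qu QA dM i => [|n] A Q d Qu QA dM i; first by case: i.
have eA : map_mx val A = conjmx (invmx Q) (diag_mx d).
  rewrite /conjmx pinvmxE ?unitmx_inv // invmxK.
  by rewrite -mulmxA -QA mulmxA mulVmx // mul1mx.
have emin : mxminpoly (map_mx val A) =
    \prod_(r <- undup [seq d 0 i | i <- enum 'I_n.+1]) ('X - r%:P).
  by rewrite eA mxminpoly_uconj ?unitmx_inv // mxminpoly_diag.
exists (undup [seq d 0 i | i <- enum 'I_n.+1]); split.
- exact: undup_uniq.
- by rewrite mem_undup; apply: map_f; rewrite mem_enum.
- by move=> z; rewrite mem_undup => /mapP [k _ ->].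
- by move=> k; rewrite -emin mxminpoly_map coef_map; apply: Kval.
Qed.

Lemma Good_char x n (B : 'M[kT]_n) (r : seq Om) : uniq r -> (forall z, z \in r -> M z) ->
  x \in r -> char_poly (map_mx val B) = \prod_(z <- r) ('X - z%:P) -> Good x.
Proof.
move=> ur rM xr.
case: n B => [|n] B e.
  have := congr1 (fun p : {poly Om} => size p) e; rewrite /= size_prod_XsubC /char_poly det_mx00 size_poly1.
  by case: r xr {ur rM e}.
set B' := map_mx val B.
have dv : mxminpoly B' %| \prod_(z <- r) ('X - z%:P) by rewrite -e mxminpoly_dvd_char.
have [P Pu Pd] := (diagonalizableP B').2 (ex_intro2 _ _ r ur dv).
have /(similar_diagLR Pu) [D eB] := Pd.
have emin : mxminpoly B' = \prod_(z <- undup [seq D 0 i | i <- enum 'I_n.+1]) ('X - z%:P).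
  by rewrite eB mxminpoly_uconj ?unitmx_inv // mxminpoly_diag.
exists n.+1, B, P, D; split => //.
- rewrite -/B' eB /conjmx pinvmxE ?unitmx_inv // invmxK.
  by rewrite !mulmxA mulmxV // mul1mx.
- move=> i; apply: rM.
  have : root (mxminpoly B') (D 0 i).
    rewrite emin root_prod_XsubC mem_undup; apply: map_f; exact: mem_enum.
  by move/(root_dvdp dv); rewrite root_prod_XsubC.
- have : root (mxminpoly B') x.
    by rewrite root_mxminpoly e root_prod_XsubC.
  rewrite emin root_prod_XsubC mem_undup => /mapP [i _ ->].
  by exists i.
Qed.


Lemma G_Good x : Gk x -> Good x.
Proof.
move=> [r [ur xr rM rK]]; set p := \prod_(z <- r) ('X - z%:P) in rK.
pose p0 : {poly kT} := \poly_(i < size p) insubd (0 : kT) p`_i.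
have ep : map_poly val p0 = p.
  apply/polyP => i; rewrite coef_map coef_poly.
  case: (ltnP i (size p)) => hi /=.
    by apply: insubdK; apply/kbP; exact: rK.
  by rewrite nth_default.
have p0m : p0 \is monic by rewrite -(map_monic val) ep monic_prod_XsubC.
apply: (Good_char (B := companionmx p0)) ur rM xr _.
by rewrite -map_char_poly companionmxK.
Qed.

Lemma Good_poly x (s : seq Om) : (forall z, z \in s -> K z) -> Good x -> Good (Poly s).[x].
Proof.
move=> sK gx; elim: s sK => [|c s IH] sK /=.
  by rewrite horner0; apply: Good_const; apply: sf0.
rewrite horner_cons; apply: Good_add.
  apply: Good_mul => //; apply: IH => z zs; apply: sK; by rewrite inE zs orbT.
by apply: Good_const; apply: sK; rewrite inE eqxx.
Qed.

Lemma Good_polyK x (q : {poly Om}) : (forall i, K q`_i) -> Good x -> Good q.[x].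
Proof.
move=> qK gx; rewrite -[q]polyseqK; apply: Good_poly => // z /(nthP 0) [i _ <-].
exact: qK.
Qed.

Lemma inv_poly x : x != 0 -> forall n (p : {poly Om}), (size p <= n)%N -> (forall i, K p`_i) ->
  p != 0 -> root p x -> exists q : {poly Om}, (forall i, K q`_i) /\ q.[x] * x = 1.
Proof.
move=> x0; elim=> [|n IH] p sp pK p0 rp.
  by move: p0; rewrite -size_poly_eq0; move: sp; rewrite leqn0 => ->.
have ep := poly_take_drop 1 p.
have et : take_poly 1 p = (p`_0)%:P.
  by apply/polyP => i; rewrite coef_take_poly coefC; case: i.
set p' := drop_poly 1 p in ep.
have p'K : forall i, K p'`_i by move=> i; rewrite coef_drop_poly.
have hx : (p'.[x] * x + p`_0 = 0).
  by move/eqP: rp; rewrite -{1}ep et hornerD hornerC hornerM hornerXn expr1 addrC.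
have [c0|c0] := eqVneq p`_0 0.
  have p'0 : p' != 0.
    apply: contra p0 => /eqP e0; by rewrite -ep e0 mul0r addr0 et c0.
  have rp' : root p' x.
    by move: hx; rewrite c0 addr0 => /eqP; rewrite mulf_eq0 (negPf x0) orbF.
  apply: (IH p') => //.
  by rewrite /p' size_drop_poly leq_subLR add1n.
exists ((- (p`_0)^-1) *: p'); split.
  move=> i; rewrite coefZ; apply: sfM => //; apply: sfN => //; apply: sfV => //.
by rewrite hornerZ -mulrA; move/eqP: hx; rewrite addr_eq0 => /eqP ->; rewrite mulNr mulrN opprK mulVf.
Qed.

Lemma Good_inv x : Good x -> Good x^-1.
Proof.
move=> gx; have [->|x0] := eqVneq x 0.
  by rewrite invr0; apply: Good_const; apply: sf0.
have [r [ur xr rM rK]] := Good_G gx.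
have pn0 : \prod_(z <- r) ('X - z%:P) != 0 by rewrite monic_neq0 // monic_prod_XsubC.
have rx : root (\prod_(z <- r) ('X - z%:P)) x by rewrite root_prod_XsubC.
have [q [qK qx]] := inv_poly x0 (leqnn _) rK pn0 rx.
have -> : x^-1 = q.[x] by rewrite -[q.[x]]mulr1 -(mulfV x0) mulrA qx mul1r.
exact: Good_polyK.
Qed.

Lemma Gk_subfield : is_subfield Gk.
Proof.
split.
- by apply: Good_G; apply: Good_const; apply: sf0.
- by apply: Good_G; apply: Good_const; apply: sf1.
- move=> x y /G_Good gx /G_Good gy; apply: Good_G.
  rewrite -mulN1r; apply: Good_add => //; apply: Good_mul => //.
  by apply: Good_const; apply: sfN => //; apply: sf1.
- by move=> x y /G_Good gx /G_Good gy; apply: Good_G; apply: Good_mul.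
- by move=> x /G_Good gx; apply: Good_G; apply: Good_inv.
Qed.

End GalB.

Arguments Gk {Om} K M x.

Section PartA.
Variable Om : fieldType.
Implicit Types (K E B : Om -> Prop).

Lemma comp_sub B (S : (Om -> Prop) -> Prop) : is_subfield (compositum B S).
Proof.
split.
- by move=> E hE _ _; apply: sf0.
- by move=> E hE _ _; apply: sf1.
- by move=> x y hx hy E hE h1 h2; apply: sfB => //; [apply: hx | apply: hy].
- by move=> x y hx hy E hE h1 h2; apply: sfM => //; [apply: hx | apply: hy].
- by move=> x hx E hE h1 h2; apply: sfV => //; apply: hx.
Qed.

Lemma comp_base B S : incl B (compositum B S).
Proof. by move=> x hx E _ h _; apply: h. Qed.

Lemma comp_gen B (S : (Om -> Prop) -> Prop) N : S N -> incl N (compositum B S).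
Proof. by move=> SN x hx E _ _ h; apply: (h N). Qed.

Lemma comp_min B S E : is_subfield E -> incl B E -> (forall N, S N -> incl N E) ->
  incl (compositum B S) E.
Proof. by move=> hE hB hS x hx; apply: hx. Qed.

Lemma kpow_sub K n : is_subfield K -> is_subfield (kpow K n).
Proof. by case: n => [|n] //= _; apply: comp_sub. Qed.

Lemma adjoin_sub K (r : Om) : is_subfield (adjoin K r).
Proof.
split.
- by move=> E hE _ _; apply: sf0.
- by move=> E hE _ _; apply: sf1.
- by move=> x y hx hy E hE h1 h2; apply: sfB => //; [apply: hx | apply: hy].
- by move=> x y hx hy E hE h1 h2; apply: sfM => //; [apply: hx | apply: hy].
- by move=> x hx E hE h1 h2; apply: sfV => //; apply: hx.
Qed.

Lemma adjoin_base K r : incl K (adjoin K r).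
Proof. by move=> x hx E _ h _; apply: h. Qed.

Definition Qd K (s : Om) : Om -> Prop := fun m => exists a b, [/\ K a, K b & m = a + b * s].

Section Q.
Variables (K : Om -> Prop) (s : Om).
Hypotheses (hK : is_subfield K) (Kss : K (s * s)) (nKs : ~ K s).

Lemma Qd_sub : is_subfield (Qd K s).
Proof.
split.
- by exists 0, 0; split; [apply: sf0 | apply: sf0 | ring].
- by exists 1, 0; split; [apply: sf1 | apply: sf0 | ring].
- move=> _ _ [a1 [b1 [ha1 hb1 ->]]] [a2 [b2 [ha2 hb2 ->]]].
  by exists (a1 - a2), (b1 - b2); split; [apply: sfB | apply: sfB | ring].
- move=> _ _ [a1 [b1 [ha1 hb1 ->]]] [a2 [b2 [ha2 hb2 ->]]].
  exists (a1 * a2 + b1 * b2 * (s * s)), (a1 * b2 + b1 * a2); split.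
  + by apply: sfD => //; apply: sfM => //; apply: sfM.
  + by apply: sfD => //; apply: sfM.
  + ring.
- move=> _ [a [b [ha hb ->]]].
  have [x0|x0] := eqVneq (a + b * s) 0.
    by rewrite x0 invr0; exists 0, 0; split; [apply: sf0 | apply: sf0 | ring].
  set N := a * a - b * b * (s * s).
  have N0 : N != 0.
    apply/negP => /eqP N0; have [b0|b0] := eqVneq b 0.
      move: N0 x0; rewrite /N b0 !mul0r subr0 addr0 => /eqP.
      by rewrite mulf_eq0 orbb => /eqP ->; rewrite eqxx.
    have : (s - a / b) * (s + a / b) = 0.
      have -> : (s - a / b) * (s + a / b) = - N / (b * b) by rewrite /N; field.
      by rewrite N0 oppr0 mul0r.
    move/eqP; rewrite mulf_eq0 => /orP [] /eqP e; apply: nKs.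
      by move/eqP: e; rewrite subr_eq0 => /eqP ->; apply: sfM => //; apply: sfV.
    by move/eqP: e; rewrite addr_eq0 => /eqP ->; apply: sfN => //; apply: sfM => //; apply: sfV.
  have KN : K N by apply: sfB => //; apply: sfM => //; apply: sfM.
  exists (a / N), (- b / N); split.
  + by apply: sfM => //; apply: sfV.
  + by apply: sfM => //; [apply: sfN | apply: sfV].
  + apply: (mulfI x0); rewrite mulfV //.
    have -> : (a + b * s) * (a / N + - b / N * s) = N / N by rewrite /N; field.
    by rewrite mulfV.
Qed.

Lemma Qd_base : incl K (Qd K s).
Proof. by move=> x hx; exists x, 0; split; [ | apply: sf0 | ring]. Qed.

Lemma Qd_s : Qd K s s.
Proof. by exists 0, 1; split; [apply: sf0 | apply: sf1 | ring]. Qed.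

Lemma Qd_quad : quad_ext K (Qd K s).
Proof.
split => //; [exact: Qd_sub | exact: Qd_base |].
exists s; split; [exact: Qd_s | exact: nKs | ].
by move=> m [a [b [ha hb ->]]]; exists a, b.
Qed.
End Q.

Lemma Qd_min K E s : is_subfield E -> incl K E -> E s -> incl (Qd K s) E.
Proof.
move=> hE hKE hs _ [a [b [ha hb ->]]].
by apply: sfD => //; [apply: hKE | apply: sfM => //; apply: hKE].
Qed.

Lemma Qd_mono K K' s : incl K K' -> incl (Qd K s) (Qd K' s).
Proof. by move=> h _ [a [b [ha hb ->]]]; exists a, b; split => //; apply: h. Qed.

Lemma quad_form K N : (2%:R : Om) != 0 -> quad_ext K N ->
  exists s, [/\ ~ K s, K (s * s), N s & incl N (Qd K s)].
Proof.
move=> two [hK hN hKN [u [Nu nKu dec]]].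
have [c [d [Kc Kd euu]]] := dec _ (sfM hN Nu Nu).
have K2 : K 2%:R by apply: sfD => //; apply: sf1.
exists (2%:R * u - d); split.
- move=> Ks; apply: nKu.
  have -> : u = (2%:R * u - d + d) / 2%:R by field.
  by apply: sfM => //; [apply: sfD | apply: sfV].
- have -> : (2%:R * u - d) * (2%:R * u - d) = 2%:R * 2%:R * c + d * d.
    have -> : c = u * u - d * u by rewrite euu; ring.
    ring.
  by apply: sfD => //; apply: sfM => //; apply: sfM.
- by apply: sfB => //; [apply: sfM => //; apply: hKN | apply: hKN].
- move=> m /dec [a [b [ha hb ->]]].
  exists (a + b * d / 2%:R), (b / 2%:R); split.
  + by apply: sfD => //; apply: sfM => //; [apply: sfM | apply: sfV].
  + by apply: sfM => //; apply: sfV.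
  + by field.
Qed.

End PartA.

Section PartC.
Variable Om : fieldType.
Implicit Types (K E M : Om -> Prop).

Lemma Gk_base K M x : is_subfield K -> incl K M -> K x -> Gk K M x.
Proof. by move=> hK hKM Kx; apply: Good_G => //; apply: Good_const. Qed.

Lemma Gk_monoM K M M' x : incl M M' -> Gk K M x -> Gk K M' x.
Proof. by move=> h [r [ur xr rM rK]]; exists r; split => // z /rM; apply: h. Qed.

Lemma Gk_monoK K K' M x : incl K K' -> Gk K M x -> Gk K' M x.
Proof. by move=> h [r [ur xr rM rK]]; exists r; split => // i; apply: h. Qed.

Lemma Gk_sq K M (s : Om) : (2%:R : Om) != 0 -> is_subfield K -> K (s * s) -> s != 0 -> M s ->
  is_subfield M -> Gk K M s.
Proof.
move=> two hK Kss s0 Ms hM; exists [:: s; - s]; split.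
- rewrite /= inE andbT; apply/negP => /eqP e; move: two.
  have -> : (2%:R : Om) = (s - - s) / s by field.
  by rewrite -e subrr mul0r eqxx.
- by rewrite inE eqxx.
- by move=> z; rewrite !inE => /orP [] /eqP ->; [ | apply: sfN].
- move=> i; rewrite big_cons big_seq1.
  have -> : ('X - s%:P) * ('X - (- s)%:P) = 'X^2 - (s * s)%:P.
    by rewrite polyCN opprK -subr_sqr polyCM.
  rewrite coefB coefXn coefC.
  case: (i == 2)%N; case: (i == 0)%N => /=; apply: sfB => //;
    by [apply: sf0 | apply: sf1].
Qed.

Lemma galois_of K M : is_subfield K -> is_subfield M -> incl K M ->
  (forall x, M x -> Gk K M x) -> galois_over K M.
Proof. by move=> hK hM hKM h; split. Qed.

Lemma main_incl (F L : Om -> Prop) : (2%:R : Om) != 0 -> is_subfield F -> is_subfield L ->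
  incl F L -> incl (kpow F 2) (kpow L 2).
Proof.
move=> two hF hL FL.
have hL2 : is_subfield (kpow L 1) by apply: kpow_sub.
have hF2 : is_subfield (kpow F 1) by apply: kpow_sub.
have LL2 : incl L (kpow L 1) by apply: comp_base.
have hL3 : is_subfield (kpow L 2) by apply: kpow_sub.
have L2L3 : incl (kpow L 1) (kpow L 2) by apply: comp_base.
have L2gal : forall x, kpow L 1 x -> Gk L (kpow L 1) x.
  apply: comp_min.
  - by apply: Gk_subfield.
  - by move=> x Lx; apply: Gk_base.
  - move=> N [qN gN'] x Nx; apply: (Gk_monoM (M := N)).
      by apply: comp_gen; split.
    by case: gN' => _ _ _ gN; apply: gN.
have F2L2 : incl (kpow F 1) (kpow L 1).
  apply: comp_min => //.
    by move=> x Fx; apply: LL2; apply: FL.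
  move=> N [qN _]; have [s [nFs Fss Ns NQ]] := quad_form two qN.
  have [Ls|nLs] := classic (L s).
    move=> x /NQ; apply: (Qd_min hL2) => //.
      by move=> y Fy; apply: LL2; apply: FL.
    exact: LL2.
  have Lss : L (s * s) by apply: FL.
  have hQ := Qd_sub hL Lss nLs.
  have s0 : s != 0 by apply/negP => /eqP s0; apply: nLs; rewrite s0; apply: sf0.
  have gQ : galois_over L (Qd L s).
    apply: galois_of => //; first exact: Qd_base.
    apply: Qd_min; first by apply: Gk_subfield => //; apply: Qd_base.
      by move=> y Ly; apply: Gk_base => //; apply: Qd_base.
    by apply: Gk_sq => //; apply: Qd_s.
  move=> x /NQ /(Qd_mono (K' := L) FL); apply: comp_gen; split => //.
  exact: Qd_quad.
apply: comp_min => //.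
  by move=> x /F2L2; apply: L2L3.
move=> M' [qM gM]; have [s [nFs Fss Ms MQ]] := quad_form two qM.
have [Ls|nLs] := classic (kpow L 1 s).
  move=> x /MQ; apply: (Qd_min hL3) => //.
    by move=> y /F2L2; apply: L2L3.
  exact: L2L3.
have Lss : kpow L 1 (s * s) by apply: F2L2.
have hQ := Qd_sub hL2 Lss nLs.
have LQ : incl L (Qd (kpow L 1) s) by move=> y /LL2; apply: Qd_base.
have MQ' : incl M' (Qd (kpow L 1) s) by move=> y /MQ; apply: Qd_mono.
have gQ : galois_over L (Qd (kpow L 1) s).
  apply: galois_of => //.
  apply: Qd_min; first by apply: Gk_subfield.
    by move=> y /L2gal; apply: Gk_monoM; apply: Qd_base.
  case: gM => _ _ _ /(_ s Ms) gs.
  by apply: (Gk_monoK (K := F)) => //; apply: (Gk_monoM (M := M')).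
move=> x /MQ'; apply: comp_gen; split => //.
exact: Qd_quad.
Qed.

End PartC.

Theorem lemma2 (Om : fieldType) (F : Om -> Prop) (a : Om) :
  quad_closure F -> (2%:R : Om) != 0 ->
  F a -> a != 0 -> ~ (exists b, F b /\ b * b = a) ->
  forall r : Om, r * r = a ->
  incl (ksup F 3) (ksup (adjoin F r) 3).
Proof.
move=> [hF _ _] two _ _ _ r _.
apply: main_incl => //; [exact: adjoin_sub | exact: adjoin_base].
Qed.
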